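(* Let $q$ be a prime power, $2\le n\le m$, let $C\subseteq\mathbb{F}_{q^m}^n$ be a vector rank-metric code, and let $\Gamma,\Gamma'$ be $\mathbb{F}_q$-bases of $\mathbb{F}_{q^m}$. Then $P(\Gamma(C),\mathrm c)=P(\Gamma'(C),\mathrm c)$ and $P(\Gamma(C),\mathrm r)\sim P(\Gamma'(C),\mathrm r)$.
   Context: A vector rank-metric code is an $\mathbb{F}_{q^m}$-linear subspace of $\mathbb{F}_{q^m}^n$. For an $\mathbb{F}_q$-basis $\Gamma=\{\gamma_1,\dots,\gamma_m\}$ of $\mathbb{F}_{q^m}$ and $v\in\mathbb{F}_{q^m}^n$, $\Gamma(v)$ is the unique $n\times m$ matrix over $\mathbb{F}_q$ with $v_i=\sum_j\Gamma(v)_{ij}\gamma_j$, and $\Gamma(C)=\{\Gamma(v)\mid v\in C\}$, an $\mathbb{F}_q$-linear subspace of the space $\mathrm{Mat}$ of $n\times m$ matrices over $\mathbb{F}_q$. For such a subspace $\mathcal{C}$ and subspaces $J\subseteq\mathbb{F}_q^n$, $K\subseteq\mathbb{F}_q^m$: $\mathcal{C}(J,\mathrm c)=\{M\in\mathcal{C}\mid\mathrm{colsp}(M)\subseteq J\}$, $\mathcal{C}(K,\mathrm r)=\{M\in\mathcal{C}\mid\mathrm{rowsp}(M)\subseteq K\}$, $\rho_{\mathrm c}(\mathcal{C},J)=(\dim\mathcal{C}-\dim\mathcal{C}(J^\perp,\mathrm c))/m$, $\rho_{\mathrm r}(\mathcal{C},K)=(\dim\mathcal{C}-\dim\mathcal{C}(K^\perp,\mathrm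 r))/n$ ($\perp$ for the standard inner product); $P(\mathcal{C},\mathrm c)=(\mathbb{F}_q^n,\rho_{\mathrm c}(\mathcal{C},\cdot))$, $P(\mathcal{C},\mathrm r)=(\mathbb{F}_q^m,\rho_{\mathrm r}(\mathcal{C},\cdot))$. Two pairs $(\mathbb{F}_q^N,\rho_1)$, $(\mathbb{F}_q^N,\rho_2)$ are equivalent ($\sim$) if there is an $\mathbb{F}_q$-linear isomorphism $\varphi$ of $\mathbb{F}_q^N$ with $\rho_1(A)=\rho_2(\varphi(A))$ for all subspaces $A$. *)

(* Defs.v *)
From HB Require Import structures.
From mathcomp Require Import all_boot all_order all_algebra all_field.
Set Implicit Arguments. Unset Strict Implicit. Unset Printing Implicit Defensive.
Import GRing.Theory Num.Theory.
Local Open Scope ring_scope.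

(* F plays the role of F_q (any finite field, so q is a prime power),
   L the role of F_{q^m} (a finite field extension of F of degree m). *)
Section RankMetricDefs.
Variables (F : finFieldType) (L : fieldExtType F).

(* The vector v with v_i = sum_j M_ij gamma_j : the inverse of v |-> Gamma(v). *)
Definition gamma_vec n m (g : m.-tuple L) (M : 'M[F]_(n, m)) : 'rV[L]_n :=
  \row_(i < n) \sum_(j < m) M i j *: tnth g j.

Definition gamma_mx n m (g : m.-tuple L) (v : 'rV[L]_n) : 'M[F]_(n, m) :=
  \matrix_(i < n, j < m) coord g j (v 0 i).

(* Gamma(C) = { Gamma(v) | v in C }, as an F-subspace of Mat (F is finite). *)
Definition Gamma_code n m (g : m.-tuple L) (C : {vspace 'rV[L]_n})
  : {vspace 'M[F]_(n, m)} :=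
  <<[seq M <- enum 'M[F]_(n, m) |
     (gamma_vec g M \in C) && (gamma_mx g (gamma_vec g M) == M)]>>%VS.

Definition perp N (J : {vspace 'rV[F]_N}) : {vspace 'rV[F]_N} :=
  <<[seq u <- enum 'rV[F]_N |
     [forall w : 'rV[F]_N, (w \in J) ==> ((u *m w^T) ord0 ord0 == 0%R)]]>>%VS.

Definition colsp_sub n m (M : 'M[F]_(n, m)) (J : {vspace 'rV[F]_n}) : bool :=
  [forall j : 'I_m, (col j M)^T \in J].

Definition rowsp_sub n m (M : 'M[F]_(n, m)) (K : {vspace 'rV[F]_m}) : bool :=
  [forall i : 'I_n, row i M \in K].

Definition sub_c n m (C : {vspace 'M[F]_(n, m)}) (J : {vspace 'rV[F]_n})
  : {vspace 'M[F]_(n, m)} :=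
  <<[seq M <- enum 'M[F]_(n, m) | (M \in C) && colsp_sub M J]>>%VS.

Definition sub_r n m (C : {vspace 'M[F]_(n, m)}) (K : {vspace 'rV[F]_m})
  : {vspace 'M[F]_(n, m)} :=
  <<[seq M <- enum 'M[F]_(n, m) | (M \in C) && rowsp_sub M K]>>%VS.

Definition rho_c n m (C : {vspace 'M[F]_(n, m)}) (J : {vspace 'rV[F]_n}) : rat :=
  ((\dim C)%:R - (\dim (sub_c C (perp J)))%:R) / m%:R.

Definition rho_r n m (C : {vspace 'M[F]_(n, m)}) (K : {vspace 'rV[F]_m}) : rat :=
  ((\dim C)%:R - (\dim (sub_r C (perp K)))%:R) / n%:R.

(* P(C, c) = (F^n, rho_c(C, .)) and P(C, r) = (F^m, rho_r(C, .)); the ambient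
   space is determined by the type, so a pair is represented by its function. *)
Definition P_c n m (C : {vspace 'M[F]_(n, m)}) := rho_c C.
Definition P_r n m (C : {vspace 'M[F]_(n, m)}) := rho_r C.

Definition pair_equiv N (r1 r2 : {vspace 'rV[F]_N} -> rat) : Prop :=
  exists phi : 'End('rV[F]_N),
    lker phi = 0%VS /\ forall A : {vspace 'rV[F]_N}, r1 A = r2 (phi @: A)%VS.

End RankMetricDefs.

(* Main.v *)
Require Import Defs.
From mathcomp Require Import all_boot all_order all_algebra all_field.
From Stdlib Require Import FunctionalExtensionality.
Set Implicit Arguments. Unset Strict Implicit. Unset Printing Implicit Defensive.
Import GRing.Theory Num.Theory.
Local Open Scope ring_scope.

Section Aux.
Variable F : finFieldType.

Lemma span_filterP p q (P : pred 'M[F]_(p, q)) :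
  P 0 -> (forall a u v, P u -> P v -> P (a *: u + v)) ->
  forall M, (M \in <<[seq x <- enum 'M[F]_(p, q) | P x]>>%VS) = P M.
Proof.
move=> P0 PC M; apply/idP/idP; last first.
  by move=> PM; apply: memv_span; rewrite mem_filter PM mem_enum.
set s := [seq x <- _ | _].
move/(@coord_span _ _ _ (in_tuple s)) => ->.
apply: (big_ind P) => //.
  by move=> x y Px Py; rewrite -(scale1r x); apply: PC.
move=> i _; rewrite -[_ *: _]addr0; apply: PC => //.
have : s`_i \in s by exact: mem_nth.
by rewrite mem_filter => /andP[].
Qed.

Lemma dim_img_inj (aT rT : vectType F) (f : 'Hom(aT, rT)) (U : {vspace aT}) :
  injective f -> \dim (f @: U) = \dim U.
Proof.
move=> /lker0P/eqP fI; apply: limg_dim_eq; by rewrite fI capv0.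
Qed.

End Aux.

Section Main.
Variables (F : finFieldType) (L : fieldExtType F).

Lemma mem_perp N (J : {vspace 'rV[F]_N}) u :
  (u \in perp J) = [forall w, (w \in J) ==> ((u *m w^T) 0 0 == 0)].
Proof.
rewrite /perp span_filterP //.
  by apply/forallP => w; rewrite mul0mx mxE eqxx implybT.
move=> a x y /forallP Px /forallP Py; apply/forallP => w.
apply/implyP => wJ; move/implyP: (Px w) => /(_ wJ) /eqP Hx.
move/implyP: (Py w) => /(_ wJ) /eqP Hy.
have E : forall A B : 'M[F]_1, (a *: A + B) 0 0 = a * A 0 0 + B 0 0.
  by move=> A B; rewrite !mxE.
by rewrite mulmxDl -scalemxAl E Hx Hy mulr0 addr0.
Qed.

Lemma mem_sub_c n m (X : {vspace 'M[F]_(n, m)}) J M :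
  (M \in sub_c X J) = (M \in X) && colsp_sub M J.
Proof.
rewrite /sub_c span_filterP //.
  rewrite mem0v /=; apply/forallP => j.
  have -> : (col j (0 : 'M[F]_(n, m)))^T = 0 by apply/rowP => i; rewrite !mxE.
  exact: mem0v.
move=> a x y /andP[xX /forallP xJ] /andP[yX /forallP yJ].
rewrite memvD ?memvZ //=; apply/forallP => j.
have -> : (col j (a *: x + y))^T = a *: (col j x)^T + (col j y)^T.
  by apply/rowP => i; rewrite !mxE.
by rewrite memvD ?memvZ.
Qed.

Lemma mem_sub_r n m (X : {vspace 'M[F]_(n, m)}) K M :
  (M \in sub_r X K) = (M \in X) && rowsp_sub M K.
Proof.
rewrite /sub_r span_filterP //.
  rewrite mem0v /=; apply/forallP => j.
  by rewrite row0 mem0v.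
move=> a x y /andP[xX /forallP xJ] /andP[yX /forallP yJ].
rewrite memvD ?memvZ //=; apply/forallP => j.
have -> : row j (a *: x + y) = a *: row j x + row j y.
  by apply/rowP => i; rewrite !mxE.
by rewrite memvD ?memvZ.
Qed.

Variables (n m : nat) (C : {vspace 'rV[L]_n}).

Lemma gamma_vecP (g : m.-tuple L) a (u v : 'M[F]_(n, m)) :
  gamma_vec g (a *: u + v) = (a%:A : L) *: gamma_vec g u + gamma_vec g v.
Proof.
apply/rowP => i; rewrite !mxE mulr_sumr -big_split /=.
by apply: eq_bigr => j _; rewrite !mxE scalerDl mulr_algl scalerA.
Qed.

Lemma gamma_mxK (g : m.-tuple L) : basis_of fullv g ->
  forall M : 'M[F]_(n, m), gamma_mx g (gamma_vec g M) = M.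
Proof.
move=> hg M; apply/matrixP => i j; rewrite !mxE linear_sum /=.
rewrite (bigD1 j) //= big1 ?addr0.
  by rewrite linearZ /= (tnth_nth 0) coord_free ?(basis_free hg) // eqxx mulr1.
move=> k kj; rewrite linearZ /= (tnth_nth 0) coord_free ?(basis_free hg) //.
by rewrite (negbTE kj) mulr0.
Qed.

Lemma mem_Gamma (g : m.-tuple L) : basis_of fullv g ->
  forall M : 'M[F]_(n, m), (M \in Gamma_code g C) = (gamma_vec g M \in C).
Proof.
move=> hg M; rewrite /Gamma_code span_filterP.
- by rewrite gamma_mxK // eqxx andbT.
- have gamma_vec0 : gamma_vec g (0 : 'M[F]_(n, m)) = 0 by apply/rowP => i; rewrite !mxE big1 // => j _; rewrite mxE scale0r.
  apply/andP; split; last by rewrite gamma_mxK. by have := mem0v C; rewrite -gamma_vec0.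
move=> a x y /andP[xC _] /andP[yC _].
by rewrite gamma_mxK // eqxx andbT gamma_vecP memvD ?memvZ.
Qed.

Definition Tm (g g' : m.-tuple L) : 'M[F]_m :=
  \matrix_(j, k) coord g k (tnth g' j).

Lemma gamma_vecT (g g' : m.-tuple L) : basis_of fullv g ->
  forall M : 'M[F]_(n, m), gamma_vec g' M = gamma_vec g (M *m Tm g g').
Proof.
move=> hg M; apply/rowP => i; rewrite !mxE.
under [RHS]eq_bigr do rewrite !mxE scaler_suml.
rewrite exchange_big /=; apply: eq_bigr => j _.
rewrite [in LHS](coord_basis hg (memvf (tnth g' j))) scaler_sumr.
apply: eq_bigr => k _; rewrite !mxE scalerA (tnth_nth 0).
by rewrite (tnth_nth 0).
Qed.

Lemma Tm_inv (g g' : m.-tuple L) : basis_of fullv g -> basis_of fullv g' ->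
  Tm g g' *m Tm g' g = 1%:M.
Proof.
move=> hg hg'; apply/matrixP => j l; rewrite !mxE.
have := coord_basis hg (memvf (tnth g' j)).
move/(congr1 (coord g' l)); rewrite linear_sum /=.
rewrite [in LHS](tnth_nth 0) coord_free ?(basis_free hg') // => ->.
apply: eq_bigr => k _; rewrite linearZ /= !mxE.
by rewrite (tnth_nth 0 g k).
Qed.

End Main.

Section Final.
Variables (F : finFieldType) (L : fieldExtType F) (n m : nat).

Definition fR p q (B : 'M[F]_q) : 'End('M[F]_(p, q)) := linfun (mulmxr B).

Lemma fRE p q (B : 'M[F]_q) M : fR p B M = M *m B.
Proof. by rewrite lfunE. Qed.

Lemma fR_inj p q (B B' : 'M[F]_q) : B *m B' = 1%:M -> injective (fR p B).
Proof.
move=> BB u v; rewrite !fRE => /(congr1 (mulmxr B')) /=.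
by rewrite -!mulmxA BB !mulmx1.
Qed.

Lemma img_char (T T' : 'M[F]_m) (X X' : {vspace 'M[F]_(n, m)}) :
  T *m T' = 1%:M -> T' *m T = 1%:M ->
  (forall M, (M \in X') = (M *m T \in X)) -> X' = (fR n T' @: X)%VS.
Proof.
move=> TT' T'T H; apply/vspaceP => M; rewrite H.
apply/idP/memv_imgP.
  by move=> MX; exists (M *m T) => //; rewrite fRE -mulmxA TT' mulmx1.
by case=> N NX ->; rewrite fRE -mulmxA T'T mulmx1.
Qed.

Lemma colsp_mul (M : 'M[F]_(n, m)) (B : 'M[F]_m) J :
  colsp_sub M J -> colsp_sub (M *m B) J.
Proof.
move=> /forallP H; apply/forallP => j.
have -> : (col j (M *m B))^T = \sum_k B k j *: (col k M)^T.
  apply/rowP => i; rewrite !mxE summxE; apply: eq_bigr => k _.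
  by rewrite !mxE mulrC.
by apply: memv_suml => k _; rewrite memvZ.
Qed.

Lemma perp_img q (B : 'M[F]_q) (K : {vspace 'rV[F]_q}) u :
  (u \in perp (fR 1 B @: K)) = (u *m B^T \in perp K).
Proof.
rewrite !mem_perp; apply/forallP/forallP => H w.
  apply/implyP => wK; have := implyP (H (w *m B)).
  rewrite -fRE memv_img // fRE trmx_mul mulmxA => /(_ isT) //.
apply/implyP => /memv_imgP [k kK ->].
by rewrite fRE trmx_mul mulmxA; exact: (implyP (H k) kK).
Qed.

End Final.

Theorem proposition5p9 (F : finFieldType) (L : fieldExtType F) (n m : nat)
  (hm : \dim (fullv : {vspace L}) = m) (h2n : (2 <= n)%N) (hnm : (n <= m)%N)
  (C : {vspace 'rV[L]_n}) (g g' : m.-tuple L)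
  (hg : basis_of (fullv : {vspace L}) g) (hg' : basis_of (fullv : {vspace L}) g') :
  P_c (Gamma_code g C) = P_c (Gamma_code g' C) /\
  pair_equiv (P_r (Gamma_code g C)) (P_r (Gamma_code g' C)).
Proof.
set T := Tm g g'; set T' := Tm g' g.
have TT' : T *m T' = 1%:M by exact: Tm_inv.
have T'T : T' *m T = 1%:M by exact: Tm_inv.
have injT' := @fR_inj F n m T' T T'T.
have GE : Gamma_code g' C = (fR n T' @: Gamma_code g C)%VS.
  apply: img_char TT' T'T _ => M.
  by rewrite !mem_Gamma // (gamma_vecT g' hg).
have colE : forall (J : {vspace 'rV[F]_n}) (M : 'M[F]_(n, m)), colsp_sub M J = colsp_sub (M *m T) J.
  move=> J M; apply/idP/idP; first exact: colsp_mul.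
  by move/(colsp_mul T'); rewrite -mulmxA TT' mulmx1.
split.
  rewrite /P_c; apply: functional_extensionality => J.
  rewrite /rho_c.
  have -> : sub_c (Gamma_code g' C) (perp J) = (fR n T' @: sub_c (Gamma_code g C) (perp J))%VS.
    apply: img_char TT' T'T _ => M.
    by rewrite !mem_sub_c !mem_Gamma // (gamma_vecT g' hg) -colE.
  by rewrite GE !dim_img_inj.
pose phi := fR 1 T^T.
have TtTt : T^T *m T'^T = 1%:M by rewrite -trmx_mul T'T trmx1.
exists phi; split.
  by apply/eqP/lker0P; exact: fR_inj TtTt.
move=> A; rewrite /P_r /rho_r.
have -> : sub_r (Gamma_code g' C) (perp (phi @: A)) = (fR n T' @: sub_r (Gamma_code g C) (perp A))%VS.
  apply: img_char TT' T'T _ => M.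
  rewrite !mem_sub_r !mem_Gamma // (gamma_vecT g' hg); congr (_ && _).
  apply/forallP/forallP => H i.
    by rewrite row_mul -(trmxK T) -perp_img.
  by have := H i; rewrite row_mul -{1}(trmxK T) -perp_img.
by rewrite GE !dim_img_inj.
Qed.
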